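(* Let $k \geq 3$ and let $F$ be a $k$-edge graph with $\gamma(F)=1$. Let $\Gamma_1$ be a pure $(m_1,F)$-special graph and $\Gamma_2$ a pure $(m_2,F)$-special graph with $V(\Gamma_1)\cap V(\Gamma_2) = \emptyset$. Let $x \in V(\Gamma_1)$, $y \in V(\Gamma_2)$, let $\Gamma$ be the graph with vertex set $V(\Gamma_1)\cup V(\Gamma_2)$ and edge set $E(\Gamma_1)\cup E(\Gamma_2)\cup\{xy\}$, and let $m = |E(\Gamma)|$. If $\iota(\Gamma,F) = \frac{m+1}{k+2}$, then $\Gamma$ is an $(m,F)$-special graph.
   Context: All graphs are finite and simple. For $D \subseteq V(G)$, $N_G[D]$ is the closed neighbourhood of $D$. A set $D \subseteq V(G)$ is an $F$-isolating set of $G$ if $G - N_G[D]$ contains no subgraph isomorphic to $F$; $\iota(G,F)$ is the minimum size of such a set. $\gamma(F)=1$ means $F$ has a vertex adjacent to all other vertices of $F$. ($m,F$)-special graphs: let $F$ be a connected $k$-edge graph. Write $m+1 = q(k+2)+r$ with integers $q \ge 0$, $0 \le r \le k+1$. If $q = 0$, an $(m,F)$-special graph is any connected $m$-edge graph. If $q \geq 1$, take distinct vertices $v_1,\dots,v_q$, copies $F_1,\dots,F_q$ of $F$ such that $V(F_1),\dots,V(F_q),\{v_1,\dots,v_q\}$ are pairwise disjoint, vertices $w_i \in V(F_i)$, and let $G_i$ be the graph with vertex set $\{v_i\}\cup V(F_i)$ and edge set $E(F_i)\cup\{v_iw_i\}$. Let $T$ be a tree with vertex set $\{v_1,\dots,v_q\}$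 (the quotient graph) and $T'$ a connected $r$-edge graph with $V(T') \cap \bigcup_i V(G_i) = \{v_q\}$ (the remainder graph). The graph with vertex set $V(T')\cup\bigcup_i V(G_i)$ and edge set $E(T)\cup E(T')\cup \bigcup_i E(G_i)$ is an $(m,F)$-special graph. It is pure if $q\ge1$ and $T'$ has no edges (so $m+1=q(k+2)$). *)

(* Defs.v *)
From mathcomp Require Import all_boot.
Set Implicit Arguments. Unset Strict Implicit. Unset Printing Implicit Defensive.

(* A finite simple graph inside an ambient finite type T is a pair (V, E):
   V : {set T} is the vertex set, E : {set {set T}} the edge set, each edge
   being a 2-element subset of V. *)

Section Graphs.
Variable T : finType.

Definition is_graph (V : {set T}) (E : {set {set T}}) : Prop :=
  forall e, e \in E -> #|e| = 2 /\ e \subset V.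

Definition eadj (E : {set {set T}}) : rel T := fun x y => [set x; y] \in E.

Definition connected (V : {set T}) (E : {set {set T}}) : Prop :=
  V != set0 /\ {in V &, forall x y, connect (eadj E) x y}.

Definition tree (V : {set T}) (E : {set {set T}}) : Prop :=
  is_graph V E /\ connected V E /\ forall e, e \in E -> ~ connected V (E :\ e).

Definition closed_nbhd (E : {set {set T}}) (D : {set T}) : {set T} :=
  D :|: [set u | [exists d in D, [set u; d] \in E]].
End Graphs.

Section FGraphs.
Variables (TF T : finType) (VF : {set TF}) (EF : {set {set TF}}).

(* the graph with vertex set W (and edges E restricted to W) contains a
   subgraph isomorphic to F = (VF, EF) *)
Definition contains_copy (W : {set T}) (E : {set {set T}}) : bool :=
  [exists f : {ffun TF -> T},
     [&& [forall a in VF, f a \in W],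
         [forall a in VF, forall b in VF, (f a == f b) ==> (a == b)]
       & [forall e in EF, (f @: e) \in E]]].

Definition isolating (V : {set T}) (E : {set {set T}}) (D : {set T}) : bool :=
  (D \subset V) && ~~ contains_copy (V :\: closed_nbhd E D) E.

(* iota(G, F): minimum size of an F-isolating set (V itself is a candidate
   whenever F has a vertex, and #|V| is used as default value) *)
Definition iotaF (V : {set T}) (E : {set {set T}}) : nat :=
  \big[minn/#|V|]_(D : {set T} | isolating V E D) #|D|.

Definition gamma_one : bool :=
  [exists c in VF, forall u in VF, (u != c) ==> ([set c; u] \in EF)].

(* The (m,F)-special construction with parameters q >= 1 and r
   (vertices v_0..v_{q-1}, copies F_i of F with vertex sets Vc i given by
   embeddings fc i, attachment vertices w i, quotient tree (Vv, ET),
   remainder graph (VR, ER) meeting the G_i only in v_{q-1}). *)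
Definition special_constr (q r : nat) (V : {set T}) (E : {set {set T}}) : Prop :=
  exists (v : nat -> T) (fc : nat -> TF -> T) (w : nat -> T)
         (ET : {set {set T}}) (VR : {set T}) (ER : {set {set T}}),
    let Vc := fun i => fc i @: VF in
    let Ec := fun i => [set fc i @: e | e : {set TF} in EF] in
    let Vv := [set v (nat_of_ord i) | i : 'I_q] in
    let VG := \bigcup_(i < q) (v i |: Vc i) in
    [/\ [/\ 0 < q,
            forall i j, i < q -> j < q -> v i = v j -> i = j,
            forall i, i < q -> {in VF &, injective (fc i)} /\ w i \in Vc i,
            forall i j, i < q -> j < q -> i != j -> [disjoint Vc i & Vc j]
          & forall i j, i < q -> j < q -> v i \notin Vc j],
        tree Vv ET,
        [/\ is_graph VR ER, connected VR ER, #|ER| = r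
          & VR :&: VG = [set v q.-1]],
        V = VR :|: VG
      & E = ET :|: ER :|: \bigcup_(i < q) (Ec i :|: [set [set v i; w i]])].

Definition special (m : nat) (V : {set T}) (E : {set {set T}}) : Prop :=
  let q := (m.+1 %/ (#|EF| + 2))%N in
  let r := (m.+1 %% (#|EF| + 2))%N in
  if q == 0 then is_graph V E /\ connected V E /\ #|E| = m
  else special_constr q r V E.

(* pure (m,F)-special graph: q >= 1 and the remainder graph has no edges *)
Definition pure_special (m : nat) (V : {set T}) (E : {set {set T}}) : Prop :=
  let q := (m.+1 %/ (#|EF| + 2))%N in
  let r := (m.+1 %% (#|EF| + 2))%N in
  [/\ 0 < q, r = 0 & special_constr q 0 V E].
End FGraphs.

(* Main.v *)
Require Import Defs.
From mathcomp Require Import all_boot zify.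
Set Implicit Arguments. Unset Strict Implicit. Unset Printing Implicit Defensive.

Lemma connect_proj (T T' : finType) (e : rel T) (e' : rel T') (p : T -> T') :
  (forall a b, e a b -> connect e' (p a) (p b)) ->
  forall a b, connect e a b -> connect e' (p a) (p b).
Proof.
move=> H a b /connectP [s Hs ->]; elim: s a Hs => [|c s IH] a /=.
  by rewrite connect0.
by case/andP => Hac Hs; apply: connect_trans (H _ _ Hac) (IH _ Hs).
Qed.

Lemma eadjC (T : finType) (E : {set {set T}}) x y : eadj E x y = eadj E y x.
Proof. by rewrite /eadj setUC. Qed.

Section Dist.
Variables (T : finType) (E : {set {set T}}) (r : T).
Let e := eadj E.
Fixpoint reach n : {set T} :=
  if n is n'.+1 then reach n' :|: [set u | [exists w in reach n', e w u]]
  else [set r].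

Lemma reach_path a p n : path e a p -> a \in reach n -> last a p \in reach (n + size p).
Proof.
elim: p a n => [|b p IH] a n /=; first by rewrite addn0.
case/andP => Hab Hp Ha; rewrite addnS -addSn; apply: IH => //=.
by apply/setUP; right; rewrite inE; apply/existsP; exists a; rewrite Ha.
Qed.

Lemma dist_ex u : exists n, (u \in reach n) || ~~ connect e r u.
Proof.
case: (boolP (connect e r u)) => [/connectP [p Hp ->] | _]; last by exists 0; rewrite orbT.
by exists (0 + size p); rewrite (reach_path Hp) // set11.
Qed.

Definition dist u := ex_minn (dist_ex u).

Lemma dist_le u n : u \in reach n -> dist u <= n.
Proof. by rewrite /dist; case: ex_minnP => d _ Hm Hu; apply: Hm; rewrite Hu. Qed.

Lemma dist_down u : connect e r u -> u != r -> exists w, e w u && (dist w < dist u).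
Proof.
move=> Hc Hur; rewrite /dist; case: ex_minnP => d; rewrite Hc orbF => Hd Hm.
case: d Hd Hm => [|d] Hd Hm; first by move: Hd; rewrite inE (negbTE Hur).
case/setUP: Hd => [Hd|]; first by have := Hm d; rewrite Hd => /(_ isT); rewrite ltnn.
rewrite inE => /existsP [w /andP [Hw Hwu]]; exists w; rewrite Hwu /=.
by rewrite ltnS; apply: dist_le.
Qed.
End Dist.

Lemma conn_edges (T : finType) (V : {set T}) (E : {set {set T}}) :
  connected V E -> #|V| <= #|E| + 1.
Proof.
case=> /set0Pn [r Hr] Hc.
pose g u := [set u; odflt u [pick w | eadj E w u && (dist E r w < dist E r u)]].
have Hg u : u \in V :\ r -> eadj E (odflt u [pick w | eadj E w u && (dist E r w < dist E r u)]) u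
   && (dist E r (odflt u [pick w | eadj E w u && (dist E r w < dist E r u)]) < dist E r u).
  case/setD1P => Hur Hu; case: pickP => [w Hw //|Hn] /=.
  have [w Hw] := dist_down (Hc r u Hr Hu) Hur; by rewrite Hn in Hw.
have Hinj : {in V :\ r &, injective g}.
  move=> u1 u2 H1 H2 Heq; apply/eqP/negPn/negP => Hne.
  have /andP [_ L1] := Hg _ H1; have /andP [_ L2] := Hg _ H2.
  have : u1 \in g u2 by rewrite -Heq /g set21.
  have : u2 \in g u1 by rewrite Heq /g set21.
  rewrite /g !inE eq_sym (negbTE Hne) /= => /eqP E2 /eqP E1.
  move: L1 L2; rewrite -E2 -E1 => L1 L2.
  by have := ltn_trans L1 L2; rewrite ltnn.
have Hsub : g @: (V :\ r) \subset E.
  apply/subsetP => _ /imsetP [u Hu ->]; have /andP [H _] := Hg _ Hu.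
  by move: H; rewrite /eadj setUC.
rewrite (cardsD1 r V) Hr add1n addn1 ltnS -(card_in_imset Hinj).
exact: subset_leq_card.
Qed.

Section F.
Variables (T TF : finType) (VF : {set TF}) (EF : {set {set TF}}).
Hypotheses (HFg : is_graph VF EF) (Hgam : gamma_one VF EF) (Hk3 : 3 <= #|EF|).

Lemma imset_pair (f : TF -> T) a b : f @: [set a; b] = [set f a; f b].
Proof. by rewrite imsetU1 imset_set1. Qed.

Lemma VF3 : 3 <= #|VF|.
Proof.
rewrite leqNgt; apply/negP => H.
have Hs : EF \subset [set VF].
  apply/subsetP => e He; have [Hc Hsub] := HFg He; rewrite inE; apply/eqP.
  apply/eqP; rewrite eqEcard Hsub Hc; by rewrite -ltnS.
by have := subset_leq_card Hs; rewrite cards1 => H1; move: Hk3; rewrite leqNgt ltnS (leq_trans H1).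
Qed.

Lemma nocopy (W : {set T}) (E : {set {set T}}) :
  (forall z, z \in W -> #|[set u in W | (u == z) || ([set z; u] \in E)]| < #|VF|) ->
  ~~ contains_copy VF EF W E.
Proof.
move=> HW; apply/negP; case/existsP => f /and3P [/forallP Hin /forallP Hinj /forallP Hed].
case/existsP: Hgam => c /andP [cV /forallP Hc].
have fcW : f c \in W by have := Hin c; rewrite cV.
have Hinj' : {in VF &, injective f}.
  move=> a b Ha Hb Hab; have := Hinj a; rewrite Ha => /forallP /(_ b); rewrite Hb Hab eqxx.
  by move/eqP.
have Hs : f @: VF \subset [set u in W | (u == f c) || ([set f c; u] \in E)].
  apply/subsetP => _ /imsetP [u Hu ->]; rewrite inE.
  have := Hin u; rewrite Hu /= => -> /=.
  case: (eqVneq u c) => [->|Huc]; first by rewrite eqxx.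
  have := Hc u; rewrite Hu Huc /= => Hcu.
  by have := Hed [set c; u]; rewrite Hcu /= imset_pair => ->; rewrite orbT.
have := subset_leq_card Hs; rewrite card_in_imset // => H.
by have := leq_ltn_trans H (HW _ fcW); rewrite ltnn.
Qed.

Lemma copy_mono (W W' : {set T}) (E : {set {set T}}) :
  W \subset W' -> contains_copy VF EF W E -> contains_copy VF EF W' E.
Proof.
move=> HWW; case/existsP => f /and3P [/forallP Hin Hinj Hed]; apply/existsP; exists f.
apply/and3P; split => //; apply/forallP => a; apply/implyP => Ha.
by have := Hin a; rewrite Ha /= => /(subsetP HWW).
Qed.

Record NSC q (V : {set T}) (E : {set {set T}}) (v : nat -> T) (fc : nat -> TF -> T)
  (w : nat -> T) (ET : {set {set T}}) : Prop := {
 n_q : 0 < q;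
 n_vinj : forall i j, i < q -> j < q -> v i = v j -> i = j;
 n_fc : forall i, i < q -> {in VF &, injective (fc i)};
 n_w : forall i, i < q -> w i \in fc i @: VF;
 n_disj : forall i j, i < q -> j < q -> i != j -> [disjoint fc i @: VF & fc j @: VF];
 n_vnc : forall i j, i < q -> j < q -> v i \notin fc j @: VF;
 n_tree : tree [set v (nat_of_ord i) | i : 'I_q] ET;
 n_V : V = \bigcup_(i < q) (v i |: fc i @: VF);
 n_E : E = ET :|: \bigcup_(i < q) ([set fc i @: e | e : {set TF} in EF] :|: [set [set v i; w i]]) }.

Lemma connect_set0 (x y : T) : connect (eadj (set0 : {set {set T}})) x y -> x = y.
Proof. by case/connectP => [[|a s]] /= => [_ ->//|]; rewrite /eadj inE. Qed.

Lemma SC_NSC q V E : special_constr VF EF q 0 V E -> exists v fc w ET, NSC q V E v fc w ET.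
Proof.
case=> v [fc [w [ET [VR [ER /=]]]]].
case=> [[Hq Hvi Hfc Hd Hvn] Htr [_ [_ HRc] HR0 HRI] HV HE].
exists v, fc, w, ET.
have ER0 : ER = set0 by apply/eqP; rewrite -cards_eq0 HR0.
have HVR : VR \subset \bigcup_(i < q) (v i |: fc i @: VF).
  have : v q.-1 \in VR :&: \bigcup_(i < q) (v i |: fc i @: VF) by rewrite HRI set11.
  case/setIP => H1 H2; apply/subsetP => u Hu.
  by have := HRc u _ Hu H1; rewrite ER0 => /connect_set0 ->.
split => //.
- by move=> i /Hfc [].
- by move=> i /Hfc [].
- by rewrite HV; apply/setUidPr.
- by rewrite HE ER0 setU0.
Qed.

Lemma NSC_SC q V E v fc w ET : NSC q V E v fc w ET -> special_constr VF EF q 0 V E.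
Proof.
case=> Hq Hvi Hfc Hw Hd Hvn Htr HV HE.
exists v, fc, w, ET, [set v q.-1], set0 => /=.
have Hin : v q.-1 \in \bigcup_(i < q) (v i |: fc i @: VF).
  have Hq' : q.-1 < q by rewrite ltn_predL.
  apply/bigcupP; exists (Ordinal Hq') => //=; by rewrite setU11.
split => //.
- by split => // i Hi; split; [apply: Hfc|apply: Hw].
- split.
  + by move=> e; rewrite inE.
  + split; first by apply/set0Pn; exists (v q.-1); rewrite set11.
    by move=> a b; rewrite !inE => /eqP -> /eqP ->; rewrite connect0.
  + by rewrite cards0.
  + by apply/setP => u; rewrite !inE; case: eqP => // ->.
- by rewrite HV; symmetry; apply/setUidPr; rewrite sub1set.
- by rewrite HE setU0.
Qed.
End F.

Lemma card_bigcup_disj (T : finType) n (A : nat -> {set T}) c :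
  (forall i, i < n -> c <= #|A i|) ->
  (forall i j, i < j -> j < n -> [disjoint A i & A j]) ->
  n * c <= #|\bigcup_(i < n) A i|.
Proof.
elim: n => [|n IH] Hc Hd; first by rewrite mul0n.
rewrite big_ord_recr /= cardsU mulSn.
have -> : (\bigcup_(i < n) A i) :&: A n = set0.
  apply/disjoint_setI0; rewrite disjoint_sym; apply/bigcup_disjoint => i _.
  by rewrite disjoint_sym; apply: Hd.
rewrite cards0 subn0 addnC leq_add //; last by apply: Hc.
apply: IH => [i Hi|i j Hij Hj]; [apply: Hc | apply: Hd] => //; exact: ltnW.
Qed.

Lemma imset_inj_sub (T TF : finType) (VF : {set TF}) (f : TF -> T) (e1 e2 : {set TF}) :
  {in VF &, injective f} -> e1 \subset VF -> e2 \subset VF -> f @: e1 = f @: e2 -> e1 = e2.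
Proof.
move=> Hi H1 H2 Heq.
suff S : forall a b : {set TF}, a \subset VF -> b \subset VF -> f @: a = f @: b -> a \subset b.
  by apply/eqP; rewrite eqEsubset (S _ _ H1 H2 Heq) (S _ _ H2 H1 (esym Heq)).
move=> a b Ha Hb Hab; apply/subsetP => u Hu.
have : f u \in f @: b by rewrite -Hab imset_f.
case/imsetP => u' Hu' /Hi -> //; [exact: (subsetP Ha)|exact: (subsetP Hb)].
Qed.

Lemma nbhdP (T : finType) (E : {set {set T}}) (D : {set T}) u :
  reflect (u \in D \/ exists2 d, d \in D & [set u; d] \in E) (u \in closed_nbhd E D).
Proof.
rewrite /closed_nbhd !inE; apply: (iffP orP) => [[->|/existsP [d /andP [Hd He]]]|[->|[d Hd He]]].
- by left.
- by right; exists d.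
- by left.
- by right; apply/existsP; exists d; rewrite Hd.
Qed.

Lemma iota_le_card (T TF : finType) (VF : {set TF}) (EF : {set {set TF}}) V E (D : {set T}) :
  isolating VF EF V E D -> iotaF VF EF V E <= #|D|.
Proof.
move=> HD; rewrite /iotaF.
have : D \in index_enum {set T} by rewrite mem_index_enum.
elim: (index_enum _) => [//|a r IH]; rewrite big_cons inE.
case/orP => [/eqP <-|Hr]; first by rewrite HD geq_minl.
by case: ifP => _; [apply: leq_trans (geq_minr _ _) (IH Hr)|apply: IH].
Qed.

Section N.
Variables (T TF : finType) (VF : {set TF}) (EF : {set {set TF}}).
Hypotheses (HFg : is_graph VF EF) (Hgam : gamma_one VF EF) (Hk3 : 3 <= #|EF|).
Variables (q : nat) (V : {set T}) (E : {set {set T}}) (v : nat -> T) (fc : nat -> TF -> T)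
  (w : nat -> T) (ET : {set {set T}}).
Hypothesis H : NSC VF EF q V E v fc w ET.

Local Notation Vc i := (fc i @: VF).
Local Notation Vv := [set v (nat_of_ord i) | i : 'I_q].

Lemma card_Vc i : i < q -> #|Vc i| = #|VF|.
Proof. by move=> Hi; rewrite card_in_imset //; apply: (n_fc H). Qed.

Lemma inVv i : i < q -> v i \in Vv.
Proof. by move=> Hi; apply/imsetP; exists (Ordinal Hi). Qed.

Lemma VvP u : reflect (exists2 i, i < q & u = v i) (u \in Vv).
Proof.
apply: (iffP imsetP) => [[i _ ->]|[i Hi ->]]; first by exists i.
by exists (Ordinal Hi).
Qed.

Lemma card_Vv : #|Vv| = q.
Proof.
rewrite card_in_imset ?card_ord // => i j _ _ /(n_vinj H) Hij.
by apply/val_inj/Hij.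
Qed.

Lemma Vc_uniq i j u : i < q -> j < q -> u \in Vc i -> u \in Vc j -> i = j.
Proof.
move=> Hi Hj Hui Huj; apply/eqP/negPn/negP => Hne.
by have := disjointFr (n_disj H Hi Hj Hne) Hui; rewrite Huj.
Qed.

Lemma v_notin_Vc u i : i < q -> u \in Vv -> u \notin Vc i.
Proof. by move=> Hi /VvP [j Hj ->]; apply: (n_vnc H). Qed.

Lemma w_in i : i < q -> w i \in Vc i.
Proof. exact: (n_w H). Qed.

Lemma ET_sub e : e \in ET -> #|e| = 2 /\ e \subset Vv.
Proof. by case: (n_tree H) => Hg _; apply: Hg. Qed.

Lemma Ec_sub i e : e \in EF -> fc i @: e \subset Vc i.
Proof. by move=> He; apply: imsetS; have [] := HFg He. Qed.

Lemma edge_cases e : e \in E ->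
  [\/ e \in ET,
      exists2 i, i < q & exists2 e', e' \in EF & e = fc i @: e'
    | exists2 i, i < q & e = [set v i; w i]].
Proof.
rewrite (n_E H) => /setUP [|/bigcupP [i _]]; first by constructor 1.
case/setUP => [/imsetP [e' He' ->]|]; first by constructor 2; exists i => //; exists e'.
by rewrite inE => /eqP ->; constructor 3; exists i.
Qed.

Lemma V_cases u : u \in V -> (exists2 i, i < q & u = v i) \/ (exists2 i, i < q & u \in Vc i).
Proof.
rewrite (n_V H) => /bigcupP [i _]; case/setU1P => [->|Hu]; [left|right]; by exists i.
Qed.

Lemma inV_v i : i < q -> v i \in V.
Proof. by move=> Hi; rewrite (n_V H); apply/bigcupP; exists (Ordinal Hi) => //; rewrite setU11. Qed.

Lemma inV_c i u : i < q -> u \in Vc i -> u \in V.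
Proof. by move=> Hi Hu; rewrite (n_V H); apply/bigcupP; exists (Ordinal Hi) => //; rewrite setU1r. Qed.

Lemma inE_ET e : e \in ET -> e \in E.
Proof. by move=> He; rewrite (n_E H) inE He. Qed.

Lemma inE_att i : i < q -> [set v i; w i] \in E.
Proof.
move=> Hi; rewrite (n_E H); apply/setUP; right; apply/bigcupP; exists (Ordinal Hi) => //.
by rewrite !inE eqxx orbT.
Qed.

Lemma inE_Ec i e : i < q -> e \in EF -> fc i @: e \in E.
Proof.
move=> Hi He; rewrite (n_E H); apply/setUP; right; apply/bigcupP; exists (Ordinal Hi) => //.
by rewrite inE imset_f.
Qed.

Lemma nb_Vc j z u : j < q -> z \in Vc j -> [set z; u] \in E ->
  u \in Vc j \/ (z = w j /\ u = v j).
Proof.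
move=> Hj Hz He; case: (edge_cases He).
- move=> /ET_sub [_ /subsetP Hs].
  by have := v_notin_Vc Hj (Hs z (set21 _ _)); rewrite Hz.
- move=> [i Hi [e' He' Heq]].
  have Hs := Ec_sub i He'; rewrite -Heq in Hs.
  have Hzi := subsetP Hs z (set21 _ _); have Hij := Vc_uniq Hi Hj Hzi Hz; subst i.
  by left; apply: (subsetP Hs); rewrite !inE eqxx orbT.
- move=> [i Hi Heq].
  have : z \in [set v i; w i] by rewrite -Heq set21.
  rewrite !inE => /orP [/eqP Hzv|/eqP Hzw].
    by move: Hz; rewrite Hzv (negbTE (n_vnc H Hi Hj)).
  have Hzi : z \in Vc i by rewrite Hzw w_in.
  have Hij : i = j := Vc_uniq Hi Hj Hzi Hz.
  subst i.
  have : u \in [set v j; w j] by rewrite -Heq !inE eqxx orbT.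
  rewrite !inE => /orP [/eqP ->|/eqP ->]; first by right.
  by left; apply: w_in.
Qed.

Lemma nb_v j u : j < q -> [set v j; u] \in E -> u \in Vv \/ u = w j.
Proof.
move=> Hj He; case: (edge_cases He).
- by move=> /ET_sub [_ /subsetP Hs]; left; apply: Hs; rewrite !inE eqxx orbT.
- move=> [i Hi [e' He' Heq]].
  have Hs := Ec_sub i He'; rewrite -Heq in Hs.
  by have := subsetP Hs (v j) (set21 _ _); rewrite (negbTE (n_vnc H Hj Hi)).
- move=> [i Hi Heq].
  have : v j \in [set v i; w i] by rewrite -Heq set21.
  rewrite !inE => /orP [/eqP Hzv|/eqP Hzw].
    have Hij := n_vinj H Hj Hi Hzv; subst i.
    have : u \in [set v j; w j] by rewrite -Heq !inE eqxx orbT.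
    rewrite !inE => /orP [/eqP ->|/eqP ->]; last by right.
    by left; apply: inVv.
  by have := n_vnc H Hj Hi; rewrite Hzw w_in.
Qed.

Lemma E_graph : is_graph V E.
Proof.
move=> e He; case: (edge_cases He).
- move=> He'; have [Hc /subsetP Hs] := ET_sub He'; split => //.
  apply/subsetP => u /Hs /VvP [i Hi ->]; exact: inV_v.
- move=> [i Hi [e' He' ->]]; have [Hc Hs] := HFg He'; split.
    rewrite card_in_imset //; move=> a b Ha Hb; apply: (n_fc H) => //;
      [exact: (subsetP Hs)|exact: (subsetP Hs)].
  apply/subsetP => u Hu; apply: (inV_c Hi); exact: (subsetP (Ec_sub i He')).
- move=> [i Hi ->]; split.
    rewrite cards2; case: eqP => // Habs.
    by have := n_vnc H Hi Hi; rewrite Habs w_in.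
  by apply/subsetP => u; rewrite !inE => /orP [] /eqP ->; [apply: inV_v|apply: (inV_c Hi); apply: w_in].
Qed.

Lemma v_has_nb i : 1 < q -> i < q -> exists2 j, j < q & (j != i) && ([set v i; v j] \in E).
Proof.
move=> Hq Hi; pose j0 := if i == 0 then 1 else 0.
have Hj0 : j0 < q by rewrite /j0; case: ifP => _ //; exact: ltnW.
have Hj0i : j0 != i by rewrite /j0; case: (eqVneq i 0) => [->|] //; rewrite eq_sym.
have [_ [[_ Hc] _]] := n_tree H.
have := Hc _ _ (inVv Hi) (inVv Hj0); case/connectP => [[|a s]] /=.
  by move=> _ Heq0; have Heq := n_vinj H Hi Hj0 (esym Heq0); move: Hj0i; rewrite Heq eqxx.
case/andP => Ha _ _.
have [Hc2 /subsetP Hs] := ET_sub Ha.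
have /VvP [j Hj Haj] : a \in Vv by apply: Hs; rewrite !inE eqxx orbT.
exists j => //; rewrite -Haj (inE_ET Ha) andbT.
apply/negP => /eqP Hji; subst j; move: Hc2; rewrite -Haj setUid cards1.
by [].
Qed.

Lemma count_E : q * (#|EF| + 2) <= #|E| + 1.
Proof.
set A := fun i => [set fc i @: e | e : {set TF} in EF] :|: [set [set v i; w i]].
have HA : forall i e, i < q -> e \in A i -> exists2 a, a \in e & a \in Vc i.
  move=> i e Hi; case/setUP => [/imsetP [e' He' ->]|].
    have [Hc Hs] := HFg He'; have /card_gt0P [a Ha] : 0 < #|e'| by rewrite Hc.
    by exists (fc i a); rewrite imset_f // (subsetP Hs).
  by rewrite inE => /eqP ->; exists (w i); rewrite ?w_in ?set21 // !inE eqxx orbT.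
have HA' : forall i e, i < q -> e \in A i -> e \subset v i |: Vc i.
  move=> i e Hi; case/setUP => [/imsetP [e' He' ->]|].
    by apply: subset_trans (Ec_sub i He') _; apply: subsetUr.
  rewrite inE => /eqP ->; apply/subsetP => u; rewrite !inE => /orP [] /eqP ->.
    by rewrite eqxx.
  by rewrite w_in // orbT.
have Hcard : forall i, i < q -> #|EF| + 1 <= #|A i|.
  move=> i Hi; rewrite /A cardsU cards1.
  have -> : [set fc i @: e | e : {set TF} in EF] :&: [set [set v i; w i]] = set0.
    apply/setP => e; rewrite !inE; apply/negP => /andP [/imsetP [e' He' ->] /eqP Heq].
    have := subsetP (Ec_sub i He') (v i); rewrite Heq set21 (negbTE (n_vnc H Hi Hi)).
    by move/(_ isT).
  rewrite cards0 subn0 card_in_imset // => a b Ha Hb; apply: imset_inj_sub (n_fc H Hi) _ _.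
    by have [] := HFg Ha.
  by have [] := HFg Hb.
have Hd : forall i j, i < j -> j < q -> [disjoint A i & A j].
  move=> i j Hij Hj; have Hi := ltn_trans Hij Hj.
  rewrite -setI_eq0; apply/negPn/negP => /set0Pn [e /setIP [Hei Hej]].
  have [a Hae Hai] := HA _ _ Hi Hei; have := subsetP (HA' _ _ Hj Hej) a Hae.
  case/setU1P => [Hav|Haj].
    by have := n_vnc H Hj Hi; rewrite -Hav Hai.
  by have := Vc_uniq Hi Hj Hai Haj => Heq; move: Hij; rewrite Heq ltnn.
have HX := card_bigcup_disj Hcard Hd.
have Htr : q <= #|ET| + 1.
  have [_ [Hc _]] := n_tree H; by have := conn_edges Hc; rewrite card_Vv.
have HD : ET :&: \bigcup_(i < q) A i = set0.
  apply/eqP/negPn/negP => /set0Pn [e /setIP [He /bigcupP [i _ Hei]]].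
  have [a Hae Hai] := HA _ _ (ltn_ord i) Hei.
  have [_ /subsetP Hs] := ET_sub He.
  by have := v_notin_Vc (ltn_ord i) (Hs _ Hae); rewrite Hai.
rewrite (n_E H) cardsU HD cards0 subn0.
move: HX Htr; set a := #|ET|; set b := #|\bigcup_(i < q) A i|; set k := #|EF|.
rewrite !mulnDr; set qk := q * k; lia.
Qed.


Lemma localW (W : {set T}) : (forall u, u \in W -> u \in V) -> (forall u, u \in W -> u \notin Vv) ->
  (forall j, j < q -> exists2 a, a \in Vc j & a \notin W) -> ~~ contains_copy VF EF W E.
Proof.
move=> HWV HWv Ha; apply: nocopy => // z Hz.
case: (V_cases (HWV _ Hz)) => [[j Hj Hzj]|[j Hj Hzj]].
  by have := HWv _ Hz; rewrite Hzj inVv.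
have [a Haj HaW] := Ha _ Hj.
have Hs : [set u in W | (u == z) || ([set z; u] \in E)] \subset Vc j :\ a.
  apply/subsetP => u; rewrite !inE => /andP [HuW /orP [/eqP ->|Hzu]].
    by rewrite Hzj andbT; apply/eqP => Hza; move: HaW; rewrite -Hza Hz.
  have Hua : u != a by apply/eqP => Hua; move: HaW; rewrite -Hua HuW.
  rewrite Hua /=; case: (nb_Vc Hj Hzj Hzu) => // [[_ Huv]].
  by have := HWv _ HuW; rewrite Huv inVv.
apply: leq_ltn_trans (subset_leq_card Hs) _.
have := cardsD1 a (Vc j); rewrite Haj card_Vc // add1n => ->.
have := VF3 HFg Hk3; by case: #|VF|.
Qed.

Lemma nbhd_sub (D : {set T}) : D \subset closed_nbhd E D.
Proof. by apply/subsetP => u Hu; apply/nbhdP; left. Qed.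

Lemma nbhd_edge (D : {set T}) d u : d \in D -> [set u; d] \in E -> u \in closed_nbhd E D.
Proof. by move=> Hd He; apply/nbhdP; right; exists d. Qed.

Lemma nbhd_mono (D D' : {set T}) : D \subset D' -> closed_nbhd E D \subset closed_nbhd E D'.
Proof.
move=> Hs; apply/subsetP => u /nbhdP [Hu|[d Hd He]]; apply/nbhdP.
  by left; apply: (subsetP Hs).
by right; exists d => //; apply: (subsetP Hs).
Qed.

Lemma nbhd0 : closed_nbhd E set0 = set0.
Proof. by apply/setP => u; rewrite [RHS]inE; apply/negP => /nbhdP [|[d]]; rewrite inE. Qed.

Lemma att_sym i : i < q -> [set w i; v i] \in E.
Proof. by move=> Hi; rewrite setUC inE_att. Qed.

Lemma Vc_nb i u : i < q -> u \in Vc i -> exists2 u', u' != u & [set u; u'] \in E.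
Proof.
move=> Hi /imsetP [a Ha ->].
case/existsP: Hgam => c /andP [cV /forallP Hc].
have Hfi := n_fc H Hi.
case: (eqVneq a c) => [Hac|Hac].
  have : 0 < #|VF :\ c|.
    have := cardsD1 c VF; rewrite cV add1n => Hcd.
    by have := VF3 HFg Hk3; rewrite Hcd ltnS => /ltnW.
  case/card_gt0P => b /setD1P [Hbc Hb].
  have Hcb : [set c; b] \in EF by have := Hc b; rewrite Hb Hbc.
  exists (fc i b).
    by apply/eqP => /Hfi Hba; move: Hbc; rewrite Hba // Hac eqxx.
  by have := inE_Ec Hi Hcb; rewrite imset_pair Hac.
have Hca : [set c; a] \in EF by have := Hc a; rewrite Ha Hac.
exists (fc i c).
  by apply/eqP => /Hfi Hca'; move: Hac; rewrite Hca' // eqxx.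
by have := inE_Ec Hi Hca; rewrite imset_pair setUC.
Qed.

Lemma iso_Vv_W : ~~ contains_copy VF EF (V :\: closed_nbhd E Vv) E.
Proof.
apply: localW.
- by move=> u /setDP [].
- move=> u /setDP [_ HuN]; apply/negP => Hu; apply: (negP HuN); exact: (subsetP (nbhd_sub _)).
- move=> j Hj; exists (w j); first exact: w_in.
  by rewrite inE negb_and negbK (nbhd_edge (inVv Hj) (att_sym Hj)).
Qed.

Lemma Vv_sub : Vv \subset V.
Proof. by apply/subsetP => u /VvP [i Hi ->]; exact: inV_v. Qed.

Lemma iota_le : iotaF VF EF V E <= q.
Proof.
rewrite -card_Vv; apply: iota_le_card; by rewrite /isolating iso_Vv_W Vv_sub.
Qed.

Definition Dm i := [set v (nat_of_ord j) | j in [set j : 'I_q | nat_of_ord j != i]].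

Lemma Dm_card i : i < q -> #|Dm i| < q.
Proof.
move=> Hi; apply: leq_ltn_trans (leq_imset_card _ _) _.
have -> : [set j : 'I_q | nat_of_ord j != i] = [set~ Ordinal Hi].
  by apply/setP => j; rewrite !inE -val_eqE.
by rewrite cardsC1 card_ord prednK // (leq_ltn_trans _ Hi).
Qed.

Lemma Dm_in i j : j < q -> j != i -> v j \in Dm i.
Proof. by move=> Hj Hji; apply/imsetP; exists (Ordinal Hj); rewrite // inE. Qed.

Lemma Dm_Vv i u : u \in Dm i -> u \in Vv.
Proof. by case/imsetP => j _ ->; apply: inVv. Qed.

Lemma Dm_sub i : Dm i \subset V.
Proof. by apply/subsetP => u /Dm_Vv /(subsetP Vv_sub). Qed.

Lemma v_cov i j (D : {set T}) : 1 < q -> i < q -> j < q -> Dm i \subset D -> v j \in closed_nbhd E D.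
Proof.
move=> Hq Hi Hj HD; apply: (subsetP (nbhd_mono HD)).
case: (eqVneq j i) => [->|Hji]; last by apply: (subsetP (nbhd_sub _)); apply: Dm_in.
have [l Hl /andP [Hli He]] := v_has_nb Hq Hi.
exact: nbhd_edge (Dm_in Hl Hli) He.
Qed.

Lemma w_cov i j (D : {set T}) : j < q -> j != i -> Dm i \subset D -> w j \in closed_nbhd E D.
Proof.
move=> Hj Hji HD; apply: (subsetP (nbhd_mono HD)).
exact: nbhd_edge (Dm_in Hj Hji) (att_sym Hj).
Qed.

Lemma sideA x : x \in V -> x \notin Vv ->
  (q = 1 /\ contains_copy VF EF (V :\ x) E) \/
  exists D1 : {set T}, [/\ D1 \subset V, #|D1| < q &
     ~~ contains_copy VF EF (V :\: (closed_nbhd E D1 :|: [set x])) E].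
Proof.
move=> Hx Hxv; have [[i Hi Hxi]|[i Hi Hxi]] := V_cases Hx.
  by move: Hxv; rewrite Hxi inVv.
case: (ltnP 1 q) => Hq.
  right; exists (Dm i); split; [exact: Dm_sub|exact: Dm_card|].
  apply: localW.
  - by move=> u /setDP [].
  - move=> u /setDP [_ HuN]; apply/negP => /VvP [j Hj Huj]; apply: (negP HuN).
    by rewrite inE Huj (v_cov Hq Hi Hj (subxx _)).
  - move=> j Hj; case: (eqVneq j i) => [->|Hji].
      by exists x => //; rewrite !inE eqxx orbT.
    exists (w j); first exact: w_in.
    by rewrite inE negb_and negbK inE (w_cov Hj Hji (subxx _)).
have Hq1 : q = 1 by apply/eqP; rewrite eqn_leq Hq (n_q H).
case: (boolP (contains_copy VF EF (V :\ x) E)) => Hc; [left|right] => //.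
exists set0; split; [exact: sub0set|by rewrite cards0 (n_q H)|].
by rewrite nbhd0 set0U.
Qed.

Lemma V_q1 : q = 1 -> V = v 0 |: Vc 0.
Proof. move=> Hq1; have HV := n_V H; move: HV; rewrite Hq1 big_ord1 //. Qed.

Lemma ET_q1 : q = 1 -> ET = set0.
Proof.
move=> Hq1; apply/setP => e; rewrite inE; apply/negP => He.
have [Hc Hs] := ET_sub He; have := subset_leq_card Hs; rewrite card_Vv Hc Hq1.
by [].
Qed.

Lemma cardV_q1 : q = 1 -> #|V| = #|VF| + 1.
Proof.
move=> Hq1; rewrite (V_q1 Hq1) cardsU1 card_Vc ?Hq1 // addnC.
have := n_vnc H (i:=0) (j:=0); rewrite Hq1 => /(_ isT isT) => ->.
by [].
Qed.

Lemma sideB y : y \in V -> exists D2 : {set T}, [/\ D2 \subset V, y \in D2, #|D2| <= q &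
     ~~ contains_copy VF EF (V :\: closed_nbhd E D2) E].
Proof.
move=> Hy; case: (boolP (y \in Vv)) => Hyv.
  by exists Vv; split; [exact: Vv_sub| |rewrite card_Vv|exact: iso_Vv_W].
have [[i Hi Hyi]|[i Hi Hyi]] := V_cases Hy; first by move: Hyv; rewrite Hyi inVv.
case: (ltnP 1 q) => Hq.
  have HD : Dm i \subset y |: Dm i by apply: subsetUr.
  exists (y |: Dm i); split.
  - by rewrite subUset sub1set Hy Dm_sub.
  - exact: setU11.
  - rewrite cardsU1; apply: leq_trans (leq_add (leq_b1 _) (leqnn _)) _.
    by rewrite add1n; exact: Dm_card Hi.
  apply: localW.
  - by move=> u /setDP [].
  - move=> u /setDP [_ HuN]; apply/negP => /VvP [j Hj Huj]; apply: (negP HuN).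
    by rewrite Huj (v_cov Hq Hi Hj HD).
  - move=> j Hj; case: (eqVneq j i) => [->|Hji].
      by exists y => //; rewrite inE negb_and negbK (subsetP (nbhd_sub _)) // setU11.
    exists (w j); first exact: w_in.
    by rewrite inE negb_and negbK (w_cov Hj Hji HD).
have Hq1 : q = 1 by apply/eqP; rewrite eqn_leq Hq (n_q H).
exists [set y]; split; [by rewrite sub1set|exact: set11|by rewrite cards1 (n_q H)|].
have [y' Hy'y Hyy'] := Vc_nb Hi Hyi.
have Hy'V : y' \in V.
  by have [_ /subsetP Hs] := E_graph Hyy'; apply: Hs; rewrite !inE eqxx orbT.
have HW : V :\: closed_nbhd E [set y] \subset V :\: [set y; y'].
  apply/subsetP => u /setDP [Hu HuN]; rewrite inE Hu andbT; apply/negP => Hu2.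
  apply: (negP HuN); move: Hu2 => /set2P [] ->.
    exact: (subsetP (nbhd_sub _)) (set11 _).
  by apply: (nbhd_edge (set11 y)); rewrite setUC.
apply: nocopy => // z Hz.
apply: leq_ltn_trans (subset_leq_card (subset_trans _ HW)) _.
  by apply/subsetP => u; rewrite inE => /andP [].
rewrite cardsD (setIidPr _); last by rewrite subUset !sub1set Hy Hy'V.
rewrite cards2 eq_sym Hy'y cardV_q1 //.
by have := VF3 HFg Hk3; case: #|VF| => // n _; rewrite addn1 subSS subn1.
Qed.

Lemma redecomp x : q = 1 -> x \in V -> x \notin Vv -> contains_copy VF EF (V :\ x) E ->
  exists v' fc' w' ET', NSC VF EF 1 V E v' fc' w' ET' /\ x = v' 0.
Proof.
move=> Hq1 Hx Hxv; case/existsP => f /and3P [/forallP Hin /forallP Hinj /forallP Hed].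
have finj : {in VF &, injective f}.
  move=> a b Ha Hb Hab; have := Hinj a; rewrite Ha /= => /forallP /(_ b); rewrite Hb Hab eqxx /=.
  by move/eqP.
have HV1 := V_q1 Hq1.
have Hxc : x \in Vc 0.
  move: Hx; rewrite HV1 => /setU1P [Hx0|//].
  by move: Hxv; rewrite Hx0 inVv // Hq1.
have Hfsub : f @: VF \subset V :\ x.
  by apply/subsetP => _ /imsetP [a Ha ->]; have := Hin a; rewrite Ha.
have HfV : f @: VF = V :\ x.
  apply/eqP; rewrite eqEcard Hfsub card_in_imset //.
  by have := cardsD1 x V; rewrite Hx cardV_q1 // add1n addn1 => [[->]] /=.
have [y' Hy'x Hxy'] := Vc_nb (i:=0) (ltac:(by rewrite Hq1)) Hxc.
have Hy'V : y' \in V.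
  by have [_ /subsetP Hs] := E_graph Hxy'; apply: Hs; rewrite !inE eqxx orbT.
pose Ef := [set f @: e | e : {set TF} in EF].
have HEf : Ef \subset E.
  by apply/subsetP => _ /imsetP [e He ->]; have := Hed e; rewrite He.
have HcEf : #|Ef| = #|EF|.
  rewrite card_in_imset // => a b Ha Hb; apply: imset_inj_sub finj _ _.
    by have [] := HFg Ha.
  by have [] := HFg Hb.
have HxEf : [set x; y'] \notin Ef.
  apply/negP => /imsetP [e He Heq].
  have : x \in f @: e by rewrite -Heq set21.
  have [_ Hs] := HFg He.
  by move/(subsetP (imsetS f Hs)); rewrite HfV !inE eqxx.
have HcE : #|E| <= #|EF| + 1.
  rewrite (n_E H) (ET_q1 Hq1) set0U Hq1 big_ord1.
  by apply: leq_trans (leq_card_setU _ _) _; rewrite cards1 leq_add2r leq_imset_card.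
have HE1 : E = [set x; y'] |: Ef.
  apply/eqP; rewrite eq_sym eqEcard; apply/andP; split.
    by rewrite subUset sub1set Hxy' HEf.
  by rewrite cardsU1 HxEf HcEf add1n -addn1.
exists (fun _ => x), (fun _ => fun_of_fin f), (fun _ => y'), set0; split => //.
have Hone : [set (fun _ : nat => x) (nat_of_ord i) | i : 'I_1] = [set x].
  by apply/setP => u; rewrite inE; apply/imsetP/eqP => [[i _ ->]|->] //; exists ord0.
split => //.
- by move=> i j; rewrite !ltnS !leqn0 => /eqP -> /eqP ->.
- by move=> i _; rewrite HfV !inE Hy'x Hy'V.
- by move=> i j; rewrite !ltnS !leqn0 => /eqP -> /eqP ->; rewrite eqxx.
- by move=> i j _ _; rewrite HfV !inE eqxx.
- rewrite Hone; split; first by move=> e; rewrite inE.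
  split; last by move=> e; rewrite inE.
  split; first by apply/set0Pn; exists x; rewrite set11.
  by move=> a b /set1P -> /set1P ->; exact: connect0.
- by rewrite big_ord1 HfV setD1K.
- by rewrite set0U big_ord1 HE1 setUC.
Qed.

End N.




Section Glue.
Variables (T : finType) (A B : {set T}) (EA EB : {set {set T}}) (x y : T).
Hypotheses (HA : tree A EA) (HB : tree B EB) (Hd : [disjoint A & B]) (Hx : x \in A) (Hy : y \in B).

Lemma eadj_sym (E : {set {set T}}) : connect_sym (eadj E).
Proof. by apply: sym_connect_sym => a b; rewrite eadjC. Qed.

Lemma tree_sub (C : {set T}) (EC : {set {set T}}) e : tree C EC -> e \in EC -> e \subset C.
Proof. by case=> Hg _ /Hg []. Qed.

Lemma edge_in2 (C : {set T}) (EC : {set {set T}}) a b : tree C EC -> [set a; b] \in EC -> (a \in C) && (b \in C).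
Proof.
move=> Ht He; have /subsetP Hs := tree_sub Ht He.
by rewrite !Hs // !inE eqxx ?orbT.
Qed.

Lemma conn_mono (E E' : {set {set T}}) a b : E \subset E' -> connect (eadj E) a b -> connect (eadj E') a b.
Proof.
move=> Hs; apply: connect_sub => u u' Hu; apply: connect1; exact: (subsetP Hs).
Qed.

Let E := EA :|: EB :|: [set [set x; y]].

Lemma xy_neq : x != y.
Proof. by apply/eqP => Hxy; have := disjointFr Hd Hx; rewrite Hxy Hy. Qed.

Lemma glue_graph : is_graph (A :|: B) E.
Proof.
move=> e; rewrite !inE => /orP [/orP [He|He]|/eqP ->].
- have [Hg _] := HA; have [Hc Hs] := Hg _ He; split => //; exact: subset_trans Hs (subsetUl _ _).
- have [Hg _] := HB; have [Hc Hs] := Hg _ He; split => //; exact: subset_trans Hs (subsetUr _ _).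
- rewrite cards2 xy_neq; split => //; apply/subsetP => u; rewrite !inE => /orP [] /eqP ->.
    by rewrite Hx. by rewrite Hy orbT.
Qed.

Lemma glue_conn : connected (A :|: B) E.
Proof.
have [_ [[_ HcA] _]] := HA; have [_ [[_ HcB] _]] := HB.
split; first by apply/set0Pn; exists x; rewrite inE Hx.
have SA a b : a \in A -> b \in A -> connect (eadj E) a b.
  by move=> Ha Hb; apply: conn_mono (HcA _ _ Ha Hb); apply/subsetP => e He; rewrite /E !inE He.
have SB a b : a \in B -> b \in B -> connect (eadj E) a b.
  by move=> Ha Hb; apply: conn_mono (HcB _ _ Ha Hb); apply/subsetP => e He; rewrite /E !inE He orbT.
have Hxy : connect (eadj E) x y by apply: connect1; rewrite /eadj /E !inE eqxx orbT.
have Hyx : connect (eadj E) y x by rewrite eadj_sym.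
move=> a b; rewrite !inE => /orP [Ha|Ha] /orP [Hb|Hb].
- exact: SA.
- exact: connect_trans (SA _ _ Ha Hx) (connect_trans Hxy (SB _ _ Hy Hb)).
- exact: connect_trans (SB _ _ Ha Hy) (connect_trans Hyx (SA _ _ Hx Hb)).
- exact: SB.
Qed.
End Glue.

Lemma glue_min1 (T : finType) (A B : {set T}) (EA EB : {set {set T}}) (x y : T) e :
  tree A EA -> tree B EB -> [disjoint A & B] -> x \in A -> y \in B -> e \in EA ->
  ~ connected (A :|: B) ((EA :|: EB :|: [set [set x; y]]) :\ e).
Proof.
move=> HA HB Hd Hx Hy He [_ Hc].
have [_ [_ Hmin]] := HA; apply: (Hmin _ He); split; first by apply/set0Pn; exists x.
pose p u := if u \in A then u else x.
have Hp : forall a b, eadj ((EA :|: EB :|: [set [set x; y]]) :\ e) a b -> connect (eadj (EA :\ e)) (p a) (p b).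
  move=> a b; rewrite /eadj !inE => /andP [Hne /orP [/orP [Hab|Hab]|/eqP Hab]].
  - have /andP [Ha Hb] := edge_in2 HA Hab; rewrite /p Ha Hb; apply: connect1.
    by rewrite /eadj !inE Hne Hab.
  - have /andP [Ha Hb] := edge_in2 HB Hab; rewrite /p (disjointFl Hd Ha) (disjointFl Hd Hb).
    exact: connect0.
  - have Ha : a \in [set x; y] by rewrite -Hab set21.
    have Hb : b \in [set x; y] by rewrite -Hab !inE eqxx orbT.
    have Py : p y = x by rewrite /p (disjointFl Hd Hy).
    have Px : p x = x by rewrite /p Hx.
    move: Ha Hb; rewrite !inE => /orP [] /eqP -> /orP [] /eqP ->; rewrite ?Px ?Py; exact: connect0.
move=> a b Ha Hb.
have := connect_proj Hp (Hc a b _ _); rewrite /p Ha Hb; apply; rewrite inE ?Ha ?Hb //.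
Qed.

Lemma bool_conn (a b : bool) : connect (fun _ _ : bool => false) a b -> a = b.
Proof. by case/connectP => [[|c s]] //= _ ->. Qed.

Lemma glue_tree (T : finType) (A B : {set T}) (EA EB : {set {set T}}) (x y : T) :
  tree A EA -> tree B EB -> [disjoint A & B] -> x \in A -> y \in B ->
  tree (A :|: B) (EA :|: EB :|: [set [set x; y]]).
Proof.
move=> HA HB Hd Hx Hy; split; first exact: glue_graph.
split; first exact: glue_conn.
move=> e He; case: (boolP (e \in EA)) => HeA; first exact: glue_min1.
case: (boolP (e \in EB)) => HeB.
  have -> : A :|: B = B :|: A by rewrite setUC.
  have -> : EA :|: EB :|: [set [set x; y]] = EB :|: EA :|: [set [set y; x]].
    by rewrite (setUC EA) [[set y; x]]setUC.
  by apply: glue_min1 => //; rewrite disjoint_sym.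
have Hexy : e = [set x; y] by move: He; rewrite !inE (negbTE HeA) (negbTE HeB) => /eqP.
case=> _ Hc.
pose p u := u \in A.
have Hp : forall a b, eadj ((EA :|: EB :|: [set [set x; y]]) :\ e) a b -> connect (fun _ _ : bool => false) (p a) (p b).
  move=> a b; rewrite /eadj !inE => /andP [Hne /orP [/orP [Hab|Hab]|/eqP Hab]].
  - by have /andP [Ha Hb] := edge_in2 HA Hab; rewrite /p Ha Hb connect0.
  - by have /andP [Ha Hb] := edge_in2 HB Hab; rewrite /p (disjointFl Hd Ha) (disjointFl Hd Hb) connect0.
  - by move: Hne; rewrite Hab Hexy eqxx.
have Hxa : x \in A :|: B by rewrite inE Hx.
have Hyb : y \in A :|: B by rewrite inE Hy orbT.
by have := bool_conn (connect_proj Hp (Hc x y Hxa Hyb)); rewrite /p Hx (disjointFl Hd Hy).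
Qed.

Section G.
Variables (T TF : finType) (VF : {set TF}) (EF : {set {set TF}}).
Hypotheses (HFg : is_graph VF EF) (Hgam : gamma_one VF EF) (Hk3 : 3 <= #|EF|).

Lemma comb1 (V1 V2 W1 W2 : {set T}) (E1 E2 : {set {set T}}) x y (f : {ffun TF -> T}) c :
  [disjoint V1 & V2] -> is_graph V1 E1 -> is_graph V2 E2 -> y \in V2 ->
  W1 \subset V1 -> W2 \subset V2 -> x \notin W1 ->
  c \in VF -> (forall u, u \in VF -> u != c -> [set c; u] \in EF) ->
  (forall a, a \in VF -> f a \in W1 :|: W2) ->
  [forall a in VF, forall b in VF, (f a == f b) ==> (a == b)] ->
  (forall e, e \in EF -> f @: e \in E1 :|: E2 :|: [set [set x; y]]) ->
  f c \in W1 -> contains_copy VF EF W1 E1.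
Proof.
move=> Hd HG1 HG2 Hy HW1 HW2 HxW Hc Hcen Hin Hinj Hed HfcW.
have Hfc1 : f c \in V1 := subsetP HW1 _ HfcW.
have HyV1 : y \notin V1 by apply/negP => H1; have := disjointFr Hd H1; rewrite Hy.
have Hall : forall a, a \in VF -> f a \in W1.
  move=> a Ha; case: (eqVneq a c) => [->//|Hac].
  have := Hed _ (Hcen _ Ha Hac); rewrite imset_pair !inE => /orP [/orP [He|He]|/eqP He].
  - have [_ /subsetP Hs] := HG1 _ He; have Ha1 : f a \in V1 by apply: Hs; rewrite !inE eqxx orbT.
    case/setUP: (Hin _ Ha) => // /(subsetP HW2) Ha2.
    by have := disjointFr Hd Ha1; rewrite Ha2.
  - have [_ /subsetP Hs] := HG2 _ He; have := Hs (f c) (set21 _ _).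
    by rewrite (disjointFr Hd Hfc1).
  - have : f c \in [set x; y] by rewrite -He set21.
    case/set2P => Hfc; first by move: HxW; rewrite -Hfc HfcW.
    by move: HyV1; rewrite -Hfc Hfc1.
apply/existsP; exists f; apply/and3P; split => //.
  by apply/forallP => a; apply/implyP => Ha; apply: Hall.
apply/forallP => e; apply/implyP => He.
have [He2 HeV] := HFg He.
have /card_gt0P [a Ha] : 0 < #|e| by rewrite He2.
have Hfa : f a \in W1 by apply: Hall; exact: (subsetP HeV).
have Hfa1 : f a \in V1 := subsetP HW1 _ Hfa.
have := Hed _ He; rewrite !inE => /orP [/orP [//|He']|/eqP He'].
- have [_ /subsetP Hs] := HG2 _ He'; have := Hs (f a) (imset_f _ Ha).
  by rewrite (disjointFr Hd Hfa1).
- have : y \in f @: e by rewrite He' !inE eqxx orbT.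
  case/imsetP => b Hb Hyb; have : f b \in W1 by apply: Hall; exact: (subsetP HeV).
  by move/(subsetP HW1); rewrite -Hyb (negbTE HyV1).
Qed.

Lemma comb (V1 V2 W1 W2 : {set T}) (E1 E2 : {set {set T}}) x y :
  [disjoint V1 & V2] -> is_graph V1 E1 -> is_graph V2 E2 -> x \in V1 -> y \in V2 ->
  W1 \subset V1 -> W2 \subset V2 -> x \notin W1 -> y \notin W2 ->
  contains_copy VF EF (W1 :|: W2) (E1 :|: E2 :|: [set [set x; y]]) ->
  contains_copy VF EF W1 E1 \/ contains_copy VF EF W2 E2.
Proof.
move=> Hd HG1 HG2 Hx Hy HW1 HW2 HxW HyW.
case/existsP => f /and3P [/forallP Hin Hinj /forallP Hed].
case/existsP: Hgam => c /andP [cV /forallP Hc].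
have Hcen : forall u, u \in VF -> u != c -> [set c; u] \in EF.
  by move=> u Hu Huc; have := Hc u; rewrite Hu Huc.
have Hin' : forall a, a \in VF -> f a \in W1 :|: W2 by move=> a Ha; have := Hin a; rewrite Ha.
have Hed' : forall e, e \in EF -> f @: e \in E1 :|: E2 :|: [set [set x; y]].
  by move=> e He; have := Hed e; rewrite He.
case/setUP: (Hin' _ cV) => Hfc.
  by left; apply: (comb1 Hd HG1 HG2 Hy HW1 HW2 HxW cV Hcen Hin' Hinj Hed' Hfc).
right; apply: (comb1 (V1 := V2) (V2 := V1) (W2 := W1) (E2 := E1) (y := x) _ HG2 HG1 Hx HW2 HW1 HyW cV Hcen _ Hinj _ Hfc).
- by rewrite disjoint_sym.
- by move=> a Ha; rewrite setUC; apply: Hin'.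
- by move=> e He; rewrite (setUC E2) (setUC [set y] [set x]); apply: Hed'.
Qed.
End G.

Section Gl.
Variables (T TF : finType) (VF : {set TF}) (EF : {set {set TF}}).
Hypotheses (HFg : is_graph VF EF) (Hgam : gamma_one VF EF) (Hk3 : 3 <= #|EF|).
Variables (q1 q2 : nat) (V1 V2 : {set T}) (E1 E2 : {set {set T}}) (v1 v2 : nat -> T)
  (fc1 fc2 : nat -> TF -> T) (w1 w2 : nat -> T) (ET1 ET2 : {set {set T}}) (a b : nat).
Hypotheses (H1 : NSC VF EF q1 V1 E1 v1 fc1 w1 ET1) (H2 : NSC VF EF q2 V2 E2 v2 fc2 w2 ET2)
  (Hd : [disjoint V1 & V2]) (Ha : a < q1) (Hb : b < q2).

Let v i := if i < q1 then v1 i else v2 (i - q1).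
Let fc i := if i < q1 then fc1 i else fc2 (i - q1).
Let w i := if i < q1 then w1 i else w2 (i - q1).

Lemma split_idx i : i < q1 + q2 -> (i < q1) \/ (~~ (i < q1) /\ i - q1 < q2).
Proof. by move=> Hi; case: (ltnP i q1) => Hq; [left|right; split => //; lia]. Qed.

Lemma disjF u : u \in V1 -> u \in V2 -> False.
Proof. by move=> H1' H2'; have := disjointFr Hd H1'; rewrite H2'. Qed.

Lemma glue_nsc : NSC VF EF (q1 + q2) (V1 :|: V2) (E1 :|: E2 :|: [set [set v1 a; v2 b]])
  v fc w (ET1 :|: ET2 :|: [set [set v1 a; v2 b]]).
Proof.
have Vc1 i u : i < q1 -> u \in fc1 i @: VF -> u \in V1 := fun Hi Hu => inV_c H1 Hi Hu.
have Vc2 i u : i < q2 -> u \in fc2 i @: VF -> u \in V2 := fun Hi Hu => inV_c H2 Hi Hu.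
have Vv1 i : i < q1 -> v1 i \in V1 := fun Hi => inV_v H1 Hi.
have Vv2 i : i < q2 -> v2 i \in V2 := fun Hi => inV_v H2 Hi.
have Hvv : [set v (nat_of_ord i) | i : 'I_(q1 + q2)] =
   [set v1 (nat_of_ord i) | i : 'I_q1] :|: [set v2 (nat_of_ord i) | i : 'I_q2].
  apply/setP => u; rewrite inE; apply/imsetP/orP.
    case=> i _ ->; rewrite /v; case: (split_idx (ltn_ord i)) => [Hi|[Hi Hi2]].
      by left; rewrite Hi; apply/imsetP; exists (Ordinal Hi).
    by right; rewrite (negbTE Hi); apply/imsetP; exists (Ordinal Hi2).
  case=> /imsetP [i _ ->].
    have Hi : i < q1 + q2 by apply: leq_trans (ltn_ord i) (leq_addr _ _).
    by exists (Ordinal Hi) => //; rewrite /v /= ltn_ord.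
  have Hi : q1 + i < q1 + q2 by rewrite ltn_add2l.
  by exists (Ordinal Hi) => //; rewrite /v /= ltnNge leq_addr /= addKn.
split.
- by rewrite addn_gt0 (n_q H1).
- move=> i j Hi Hj; rewrite /v.
  case: (split_idx Hi) => [Hi1|[Hi1 Hi2]]; case: (split_idx Hj) => [Hj1|[Hj1 Hj2]];
    rewrite ?Hi1 ?Hj1 ?(negbTE Hi1) ?(negbTE Hj1).
  + exact: (n_vinj H1).
  + by move=> Heq; case: (disjF (Vv1 _ Hi1)); rewrite Heq Vv2.
  + by move=> Heq; case: (disjF (Vv1 _ Hj1)); rewrite -Heq Vv2.
  + move/(n_vinj H2 Hi2 Hj2) => Heq; move: Hi1 Hj1; rewrite -!leqNgt => Hi1 Hj1; lia.
- move=> i Hi; rewrite /fc; case: (split_idx Hi) => [Hi1|[Hi1 Hi2]];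
    rewrite ?Hi1 ?(negbTE Hi1); [exact: (n_fc H1)|exact: (n_fc H2)].
- move=> i Hi; rewrite /fc /w; case: (split_idx Hi) => [Hi1|[Hi1 Hi2]];
    rewrite ?Hi1 ?(negbTE Hi1); [exact: (n_w H1)|exact: (n_w H2)].
- move=> i j Hi Hj Hij; rewrite /fc.
  case: (split_idx Hi) => [Hi1|[Hi1 Hi2]]; case: (split_idx Hj) => [Hj1|[Hj1 Hj2]];
    rewrite ?Hi1 ?Hj1 ?(negbTE Hi1) ?(negbTE Hj1).
  + exact: (n_disj H1).
  + rewrite -setI_eq0; apply/eqP/setP => u; rewrite !inE; apply/negP => /andP [Hu1 Hu2].
    by apply: (disjF (Vc1 _ _ Hi1 Hu1) (Vc2 _ _ Hj2 Hu2)).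
  + rewrite -setI_eq0; apply/eqP/setP => u; rewrite !inE; apply/negP => /andP [Hu1 Hu2].
    by apply: (disjF (Vc1 _ _ Hj1 Hu2) (Vc2 _ _ Hi2 Hu1)).
  + apply: (n_disj H2) => //; apply/negP => /eqP Heq; move: Hij Hi1 Hj1; rewrite -!leqNgt.
    move=> /negP Hij Hi1 Hj1; apply: Hij; apply/eqP; lia.
- move=> i j Hi Hj; rewrite /v /fc.
  case: (split_idx Hi) => [Hi1|[Hi1 Hi2]]; case: (split_idx Hj) => [Hj1|[Hj1 Hj2]];
    rewrite ?Hi1 ?Hj1 ?(negbTE Hi1) ?(negbTE Hj1).
  + exact: (n_vnc H1).
  + by apply/negP => /(Vc2 _ _ Hj2) => H'; apply: (disjF (Vv1 _ Hi1) H').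
  + by apply/negP => /(Vc1 _ _ Hj1) => H'; apply: (disjF H' (Vv2 _ Hi2)).
  + exact: (n_vnc H2).
- rewrite Hvv; apply: glue_tree; [exact: (n_tree H1)|exact: (n_tree H2)| | |].
  + rewrite -setI_eq0; apply/eqP/setP => u; rewrite !inE; apply/negP.
    case/andP => /imsetP [i _ ->] /imsetP [j _ Hj]; apply: (disjF (Vv1 _ (ltn_ord i))).
    by rewrite Hj Vv2.
  + by apply/imsetP; exists (Ordinal Ha).
  + by apply/imsetP; exists (Ordinal Hb).
- rewrite (n_V H1) (n_V H2) big_split_ord; congr (_ :|: _); apply: eq_bigr => i _.
    by rewrite /v /fc /= ltn_ord.
  by rewrite /v /fc /= ltnNge leq_addr /= addKn.
- rewrite (n_E H1) (n_E H2) big_split_ord.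
  have -> : \bigcup_(i < q1) ([set fc (lshift q2 i) @: e | e : {set TF} in EF] :|: [set [set v (lshift q2 i); w (lshift q2 i)]])
     = \bigcup_(i < q1) ([set fc1 i @: e | e : {set TF} in EF] :|: [set [set v1 i; w1 i]]).
    by apply: eq_bigr => i _; rewrite /v /fc /w /= ltn_ord.
  have -> : \bigcup_(i < q2) ([set fc (rshift q1 i) @: e | e : {set TF} in EF] :|: [set [set v (rshift q1 i); w (rshift q1 i)]])
     = \bigcup_(i < q2) ([set fc2 i @: e | e : {set TF} in EF] :|: [set [set v2 i; w2 i]]).
    by apply: eq_bigr => i _; rewrite /v /fc /w /= ltnNge leq_addr /= addKn.
  by rewrite setUACA setUAC.
Qed.
End Gl.

Section Opt.
Variables (T TF : finType) (VF : {set TF}) (EF : {set {set TF}}).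
Hypotheses (HFg : is_graph VF EF) (Hgam : gamma_one VF EF) (Hk3 : 3 <= #|EF|).
Variables (q1 q2 : nat) (V1 V2 : {set T}) (E1 E2 : {set {set T}}) (v1 v2 : nat -> T)
  (fc1 fc2 : nat -> TF -> T) (w1 w2 : nat -> T) (ET1 ET2 : {set {set T}}) (x y : T).
Hypotheses (H1 : NSC VF EF q1 V1 E1 v1 fc1 w1 ET1) (H2 : NSC VF EF q2 V2 E2 v2 fc2 w2 ET2)
  (Hd : [disjoint V1 & V2]) (Hx : x \in V1) (Hy : y \in V2).

Lemma opt (D1 : {set T}) : D1 \subset V1 -> #|D1| < q1 ->
  ~~ contains_copy VF EF (V1 :\: (closed_nbhd E1 D1 :|: [set x])) E1 ->
  iotaF VF EF (V1 :|: V2) (E1 :|: E2 :|: [set [set x; y]]) < q1 + q2.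
Proof.
move=> HD1 HcD1 HnD1.
have [D2 [HD2 HyD2 HcD2 HnD2]] := sideB HFg Hgam Hk3 H2 Hy.
set E := E1 :|: E2 :|: [set [set x; y]].
have HG1 := E_graph HFg H1; have HG2 := E_graph HFg H2.
have HE1 : forall e, e \in E1 -> e \in E by move=> e He; rewrite /E !inE He.
have HE2 : forall e, e \in E2 -> e \in E by move=> e He; rewrite /E !inE He orbT.
set D := D1 :|: D2.
have HND : forall (Di : {set T}) (Ei : {set {set T}}) u, Di \subset D -> (forall e, e \in Ei -> e \in E) ->
    u \in closed_nbhd Ei Di -> u \in closed_nbhd E D.
  move=> Di Ei u HDi HEi /nbhdP [Hu|[d Hd' He]]; apply/nbhdP.
    by left; apply: (subsetP HDi).
  by right; exists d; [apply: (subsetP HDi)|apply: HEi].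
have HxN : x \in closed_nbhd E D.
  by apply/nbhdP; right; exists y; [rewrite /D inE HyD2 orbT|rewrite /E !inE eqxx orbT].
set W1 := V1 :\: (closed_nbhd E1 D1 :|: [set x]).
set W2 := V2 :\: closed_nbhd E2 D2.
apply: leq_ltn_trans (iota_le_card (D := D) _) _.
  rewrite /isolating; apply/andP; split.
    by rewrite subUset (subset_trans HD1 (subsetUl _ _)) (subset_trans HD2 (subsetUr _ _)).
  apply/negP => Hc.
  have Hsub : (V1 :|: V2) :\: closed_nbhd E D \subset W1 :|: W2.
    apply/subsetP => u /setDP [/setUP [Hu|Hu] HuN].
      rewrite inE; apply/orP; left; rewrite /W1 inE Hu andbT inE negb_or; apply/andP; split.
        by apply/negP => /(HND _ _ _ (subsetUl _ _) HE1); apply/negP.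
      by rewrite inE; apply/negP => /eqP Hux; move: HuN; rewrite Hux HxN.
    rewrite inE; apply/orP; right; rewrite /W2 inE Hu andbT.
    by apply/negP => /(HND _ _ _ (subsetUr _ _) HE2); apply/negP.
  have HW1 : W1 \subset V1 by apply: subsetDl.
  have HW2 : W2 \subset V2 by apply: subsetDl.
  have HxW : x \notin W1 by rewrite /W1 !inE eqxx orbT.
  have HyW : y \notin W2 by rewrite /W2 inE negb_and negbK (subsetP (nbhd_sub _ _)).
  case: (comb HFg Hgam Hd HG1 HG2 Hx Hy HW1 HW2 HxW HyW (copy_mono (VF := VF) (EF := EF) Hsub Hc)).
    by apply/negP.
  by apply/negP.
apply: leq_ltn_trans (leq_card_setU _ _) _.
by rewrite -addSn; apply: leq_add.
Qed.
End Opt.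

Unset Implicit Arguments.

Theorem lemma3p6 (T TF : finType) (VF : {set TF}) (EF : {set {set TF}})
  (k m1 m2 : nat) (V1 V2 : {set T}) (E1 E2 : {set {set T}}) (x y : T) :
  3 <= k -> is_graph VF EF -> #|EF| = k -> gamma_one VF EF ->
  pure_special VF EF m1 V1 E1 -> pure_special VF EF m2 V2 E2 ->
  [disjoint V1 & V2] -> x \in V1 -> y \in V2 ->
  let V := V1 :|: V2 in
  let E := E1 :|: E2 :|: [set [set x; y]] in
  let m := #|E| in
  iotaF VF EF V E * (k + 2) = m + 1 ->
  special VF EF m V E.
Proof.
move=> Hk HFg HEF Hgam [Hq1 _ HS1] [Hq2 _ HS2] Hd Hx Hy V E m Hiota.
have Hk3 : 3 <= #|EF| by rewrite HEF.
rewrite -HEF in Hiota; rewrite /m in Hiota; rewrite /m; clear m.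
have [v1 [fc1 [w1 [ET1 H1]]]] := SC_NSC HS1.
have [v2 [fc2 [w2 [ET2 H2]]]] := SC_NSC HS2.
clear HS1 HS2 Hq1 Hq2.
set q1 := m1.+1 %/ _ in H1; clearbody q1.
set q2 := m2.+1 %/ _ in H2; clearbody q2.
have HG1 := E_graph HFg H1; have HG2 := E_graph HFg H2.
have HyV1 : y \notin V1 by apply/negP => H'; have := disjointFr Hd H'; rewrite Hy.
have HxV2 : x \notin V2 by apply/negP => H'; have := disjointFl Hd H'; rewrite Hx.
have HE : #|E| = #|E1| + #|E2| + 1.
  have Hxy : [set x; y] \notin E1 :|: E2.
    apply/negP => /setUP [He|He].
      by have [_ /subsetP Hs] := HG1 _ He; have := Hs y; rewrite !inE eqxx orbT (negbTE HyV1) => /(_ isT).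
    by have [_ /subsetP Hs] := HG2 _ He; have := Hs x; rewrite !inE eqxx (negbTE HxV2) => /(_ isT).
  have HI : E1 :&: E2 = set0.
    apply/eqP/negPn/negP => /set0Pn [e /setIP [He1 He2]].
    have [Hc /subsetP Hs1] := HG1 _ He1; have [_ /subsetP Hs2] := HG2 _ He2.
    have /card_gt0P [u Hu] : 0 < #|e| by rewrite Hc.
    by have := disjointFr Hd (Hs1 _ Hu); rewrite Hs2.
  by rewrite /E setUC cardsU1 Hxy cardsU HI cards0 subn0 add1n addn1.
have C1 := count_E HFg Hgam Hk3 H1; have C2 := count_E HFg Hgam Hk3 H2.
have Hlow : q1 + q2 <= iotaF VF EF V E.
  move: Hiota C1 C2; rewrite HE; set K := #|EF| + 2; set io := iotaF VF EF V E.
  have HK : 0 < K by rewrite /K addn2.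
  move=> Hiota C1 C2; rewrite -(leq_pmul2r HK) mulnDl Hiota.
  lia.
have G1 : exists v fc w ET a, [/\ NSC VF EF q1 V1 E1 v fc w ET, a < q1 & x = v a].
  case: (boolP (x \in [set v1 (nat_of_ord i) | i : 'I_q1])) => Hxv.
    by case/VvP: Hxv => a Ha ->; exists v1, fc1, w1, ET1, a.
  case: (sideA HFg Hgam Hk3 H1 Hx Hxv) => [[Hq11 Hc]|[D1 [HD1 HcD1 HnD1]]].
    have [v' [fc' [w' [ET' [H' Hx']]]]] := redecomp HFg Hgam Hk3 H1 Hq11 Hx Hxv Hc.
    by exists v', fc', w', ET', 0; rewrite Hq11.
  have := opt HFg Hgam Hk3 H1 H2 Hd Hx Hy HD1 HcD1 HnD1.
  by rewrite -/V -/E ltnNge Hlow.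
have G2 : exists v fc w ET b, [/\ NSC VF EF q2 V2 E2 v fc w ET, b < q2 & y = v b].
  case: (boolP (y \in [set v2 (nat_of_ord i) | i : 'I_q2])) => Hyv.
    by case/VvP: Hyv => b Hb ->; exists v2, fc2, w2, ET2, b.
  case: (sideA HFg Hgam Hk3 H2 Hy Hyv) => [[Hq21 Hc]|[D1 [HD1 HcD1 HnD1]]].
    have [v' [fc' [w' [ET' [H' Hy']]]]] := redecomp HFg Hgam Hk3 H2 Hq21 Hy Hyv Hc.
    by exists v', fc', w', ET', 0; rewrite Hq21.
  have Hd' : [disjoint V2 & V1] by rewrite disjoint_sym.
  have := opt HFg Hgam Hk3 H2 H1 Hd' Hy Hx HD1 HcD1 HnD1.
  have -> : V2 :|: V1 = V by rewrite /V setUC.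
  have -> : E2 :|: E1 :|: [set [set y; x]] = E by rewrite /E (setUC E2) (setUC [set y]).
  by rewrite addnC ltnNge Hlow.
have [v1' [fc1' [w1' [ET1' [a [H1' Ha Hxa]]]]]] := G1.
have [v2' [fc2' [w2' [ET2' [b [H2' Hb Hyb]]]]]] := G2.
have HN := glue_nsc Hgam Hk3 H1' H2' Hd Ha Hb.
rewrite -Hxa -Hyb -/V -/E in HN.
have Hup := iota_le HFg Hgam Hk3 HN.
have Heq : iotaF VF EF V E = q1 + q2 by apply/eqP; rewrite eqn_leq Hup Hlow.
rewrite Heq in Hiota.
rewrite /special /= -addn1 -Hiota mulnK ?addn2 // modnMl.
have -> : (q1 + q2 == 0) = false by have := n_q H1; case: q1 {H1 H1' HN Hiota Heq Hlow Hup C1 Ha G1}.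
exact: NSC_SC HN.
Qed.
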